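(* Let $G=(V,E,\omega)$ be a graph with $V=\{v_1,\dots,v_n\}$, and let $S=\{v_{i_1},\dots,v_{i_p}\}$ (with $i_1<\dots<i_p$) be a structural set of $G$. Then $\mathcal{R}_S(G)$ is the graph whose weighted adjacency matrix (with vertices ordered $v_{i_1},\dots,v_{i_p}$) is $r\big(M(G)-\lambda I;\{i_1,\dots,i_p\}\big)+\lambda I$.
   Context: $\mathbb{W}$ is the field of rational functions in a complex variable $\lambda$ with complex coefficients. A graph $G=(V,E,\omega)$ is a finite directed graph with vertex set $V=\{v_1,\dots,v_n\}$, edges $E$ (loops allowed, at most one edge $e_{ij}$ from $v_i$ to $v_j$), weights $\omega:E\to\mathbb{W}\setminus\{0\}$, $\omega(e_{ij})=0$ for non-edges; $M(G)_{ij}=\omega(e_{ij})$. $\bar S=V\setminus S$; $\ell(G)$ is $G$ without loops; $G|_U$ is an induced subgraph. A path is a sequence of distinct vertices $u_1,\dots,u_m$ ($m\ge2$) with edges $u_k\to u_{k+1}$; a cycle is the same with $u_1=u_m$, $u_1,\dots,u_{m-1}$ distinct; $u_2,\dots,u_{m-1}$ are interior. A nonempty $S\subseteq V$ is a structural set if $\ell(G)|_{\bar S}$ has no cycles and $\omega(e_{ii})\ne\lambda$ for $v_i\in\bar S$. For $v_i,v_j\in S$, $\mathcal{B}_{ij}(G;S)$ is the set of paths or cycles from $v_i$ to $v_j$ with no interior vertex in $S$; $\mathcal{P}_\omega(u_1,\dots,u_m)=\omega(u_1u_2)\prod_{k=2}^{m-1}\frac{\omega(u_ku_{k+1})}{\lambda-\omega(u_ku_k)}$;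 $\mathcal{R}_S(G)$ is the graph on $S$ with an edge $v_i\to v_j$ iff $\mathcal{B}_{ij}(G;S)\ne\emptyset$, of weight $\sum_{\beta\in\mathcal{B}_{ij}(G;S)}\mathcal{P}_\omega(\beta)$. Matrix reduction: for $N\in\mathbb{W}^{n\times n}$ and nonempty $\mathcal{I}\subseteq\{1,\dots,n\}$ with complement $\bar{\mathcal{I}}$, let $A$ ($D$) be the principal submatrix indexed by $\bar{\mathcal{I}}$ ($\mathcal{I}$), $B$ the submatrix with rows $\bar{\mathcal{I}}$, columns $\mathcal{I}$, $C$ the submatrix with rows $\mathcal{I}$, columns $\bar{\mathcal{I}}$ (indices in increasing order); if $A$ is invertible, $r(N;\mathcal{I})=D-CA^{-1}B$ (and $r(N;\{1,\dots,n\})=N$). *)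

(* Defs.v *)
From HB Require Import structures.
From mathcomp Require Import all_boot all_order all_algebra.
From mathcomp Require Import fraction complex reals.
Set Implicit Arguments. Unset Strict Implicit. Unset Printing Implicit Defensive.
Import Order.TTheory GRing.Theory Num.Theory.
Local Open Scope ring_scope.

(* The field W = C(lambda) of rational functions in lambda with complex
   coefficients; C is modelled as complex R for R a real type (the reals). *)
Definition W (R : realType) := {fraction {poly R[i]}}.

Definition lam (R : realType) : W R := tofrac ('X : {poly R[i]}).

(* the a-th element (in increasing order) of a set S of indices:
   enum S lists S in increasing order *)
Definition sidx (n : nat) (S : {set 'I_n}) (a : 'I_#|S|) : 'I_n := enum_val a.

Section Graphs.
Variables (R : realType) (n : nat).
Implicit Types (M : 'M[W R]_n) (S : {set 'I_n}) (s : seq 'I_n).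

(* A graph G on vertices v_1..v_n (ordinals 'I_n) is represented by its
   weighted adjacency matrix M = M(G): there is an edge v_i -> v_j iff
   M i j != 0, and then its weight is M i j. *)
Definition edge M : rel 'I_n := fun a b => M a b != 0.
Definition edge_noloop M : rel 'I_n := fun a b => (a != b) && (M a b != 0).

Definition is_gpath (e : rel 'I_n) s :=
  match s with
  | [::] => false
  | x :: t => [&& (1 <= size t)%N, uniq s & path e x t]
  end.

Definition is_gcycle (e : rel 'I_n) s :=
  match s with
  | [::] => false
  | x :: t => [&& (1 <= size t)%N, last x t == x, uniq (belast x t) & path e x t]
  end.

Definition interior s : seq 'I_n :=
  match s with
  | [::] => [::]
  | x :: t => behead (belast x t)
  end.

Definition structural M S :=
  [/\ S != set0,
      (forall s, all (fun v => v \notin S) s -> ~~ is_gcycle (edge_noloop M) s)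
    & forall i, i \notin S -> M i i != lam R].

Definition inB M S (i j : 'I_n) s :=
  [&& is_gpath (edge M) s || is_gcycle (edge M) s,
      head i s == i, last i s == j &
      all (fun v => v \notin S) (interior s)].

Definition Pw M s : W R :=
  match s with
  | x :: y :: t =>
      M x y * \prod_(k < size t)
        (M (nth x (y :: t) k) (nth x (y :: t) k.+1) /
         (lam R - M (nth x (y :: t) k) (nth x (y :: t) k)))
  | _ => 0
  end.

(* Every element of B_ij(G;S) has at most n+1 vertices, so B_ij(G;S) is
   exactly the set of k-tuples (k < n+2) satisfying inB. *)
Definition Bnonempty M S i j :=
  [exists k : 'I_n.+2, exists t : k.-tuple 'I_n, inB M S i j t].

Definition Bsum M S i j : W R :=
  \sum_(k < n.+2) \sum_(t : k.-tuple 'I_n | inB M S i j t) Pw M t.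

Definition RS M S : 'M[W R]_#|S| :=
  \matrix_(a, b) (if Bnonempty M S (sidx a) (sidx b)
                  then Bsum M S (sidx a) (sidx b) else 0).

End Graphs.


(* Matrix reduction r(N; I), the index set I being given as a set of
   ordinals; entries of the blocks are taken in increasing index order. *)
Section Reduction.
Variables (F : fieldType) (n : nat) (N : 'M[F]_n) (I : {set 'I_n}).
Definition redA : 'M[F]_#|~: I| := \matrix_(a, b) N (sidx a) (sidx b).
Definition redB : 'M[F]_(#|~: I|, #|I|) := \matrix_(a, b) N (sidx a) (sidx b).
Definition redC : 'M[F]_(#|I|, #|~: I|) := \matrix_(a, b) N (sidx a) (sidx b).
Definition redD : 'M[F]_#|I| := \matrix_(a, b) N (sidx a) (sidx b).
(* r(N; I) = D - C A^{-1} B (meaningful when A is invertible; when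
   I is everything, A is the empty matrix and r(N; I) = D = N) *)
Definition mxreduce : 'M[F]_#|I| := redD - redC *m invmx redA *m redB.
End Reduction.

(* Main.v *)
Require Import Defs.
From HB Require Import structures.
From mathcomp Require Import all_boot all_order all_algebra.
From mathcomp Require Import fraction complex reals.
From mathcomp Require Import ring.
Import Order.TTheory GRing.Theory Num.Theory.
Local Open Scope ring_scope.
Set Implicit Arguments. Unset Strict Implicit. Unset Printing Implicit Defensive.

Lemma big_tuple_cons (V : zmodType) (T : finType) k (f : k.+1.-tuple T -> V) :
  \sum_(t : k.+1.-tuple T) f t = \sum_(x : T) \sum_(t : k.-tuple T) f [tuple of x :: t].
Proof.
rewrite pair_big /=.
rewrite (reindex (fun p : T * k.-tuple T => [tuple of p.1 :: p.2])) //=.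
exists (fun t => (thead t, behead_tuple t)) => [[x t] _|t _] /=.
  by rewrite theadE; congr pair; apply: val_inj.
by rewrite [RHS]tuple_eta.
Qed.

Lemma big_tuple0 (V : zmodType) (T : finType) (f : 0.-tuple T -> V) :
  \sum_(t : 0.-tuple T) f t = f [tuple].
Proof. by rewrite (big_pred1 [tuple]) // => t; rewrite /= tuple0; apply/eqP. Qed.

Fixpoint gprod (V : ringType) n (g : 'I_n -> 'I_n -> V) (y : 'I_n) (t : seq 'I_n) : V :=
  if t is z :: t' then g y z * gprod g z t' else 1.

Lemma powF (V : comRingType) n (F : 'M[V]_n) m u v :
  (F ^+ m) u v = \sum_(t : m.-tuple 'I_n) (last u t == v)%:R * gprod F u t.
Proof.
elim: m u v => [|m IH] u v.
  by rewrite expr0 big_tuple0 /= mulr1 mxE.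
rewrite exprS -mulmxE mxE big_tuple_cons; apply: eq_bigr => w _.
rewrite IH mulr_sumr; apply: eq_bigr => t _ /=.
by rewrite mulrCA.
Qed.

Lemma prod_nth (V : comRingType) n (h : 'I_n -> 'I_n -> V) x w t :
  \prod_(k < size t) h (nth x (w :: t) k) (nth x (w :: t) k.+1) = gprod h w t.
Proof.
elim: t w => [|z t IH] w /=; first by rewrite big_ord0.
rewrite big_ord_recl /=; congr (_ * _); rewrite -IH.
by apply: eq_bigr.
Qed.

Lemma uniq_belast (T : eqType) (w : T) t : uniq (w :: t) -> uniq (belast w t).
Proof. by rewrite lastI rcons_uniq => /andP[]. Qed.

Section Main.
Variables (R : realType) (n : nat) (M : 'M[W R]_n) (S : {set 'I_n}).
Hypothesis HS0 : S != set0.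
Hypothesis Hcyc : forall s, all (fun v => v \notin S) s -> ~~ is_gcycle (edge_noloop M) s.
Hypothesis Hdiag : forall i, i \notin S -> M i i != lam R.

Local Notation lm := (lam R).
Local Notation P := (fun v : 'I_n => v \notin S).

Definition Fm : 'M[W R]_n :=
  \matrix_(u, v) if (u \notin S) && (u != v) then M u v / (lm - M u u) else 0.
Definition Fnz (u v : 'I_n) := [&& u \notin S, u != v & M u v != 0].

Lemma gprod_nz y t : gprod Fm y t != 0 -> path Fnz y t.
Proof.
elim: t y => [|z t IH] y /=; first by move=> _.
rewrite mulf_eq0 negb_or => /andP[H1 H2].
rewrite (IH _ H2) andbT; move: H1.
rewrite mxE /Fnz.
case: ifP => [/andP[H3 H4]|].
  rewrite H3 H4 /= mulf_eq0 negb_or.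
  move=> /andP[H5 _]; exact: H5.
move=> _; rewrite eqxx => /negP H; exfalso; exact: H.
Qed.

Lemma path_Fnz_notin y t : path Fnz y t -> all P (belast y t).
Proof.
elim: t y => [//|z t IH] y /= /andP[/and3P[-> _ _] Hp] /=; exact: IH.
Qed.

Lemma acyc_uniq k : forall s x, (size s < k)%N -> all P (x :: s) ->
  path (edge_noloop M) x s -> uniq (x :: s).
Proof.
elim: k => // k IH s x Hs Hall Hp.
case Hx: (x \in s).
  exfalso.
  pose i := index x s.
  have Hi : (i < size s)%N by rewrite index_mem.
  pose s1 := take i s.
  have Es : s = s1 ++ x :: drop i.+1 s.
    by rewrite -{1}(cat_take_drop i s) (drop_nth x Hi) nth_index.
  have Hp1 : path (edge_noloop M) x (rcons s1 x).
    move: Hp; rewrite {1}Es cat_path rcons_path => /andP[-> /=] /andP[-> _] //.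
  have Hall1 : all P (x :: s1).
    move: Hall; rewrite /= {1}Es all_cat => /andP[-> /andP[-> _]] //.
  have Hu : uniq (x :: s1).
    apply: IH => //; last by move: Hp1; rewrite rcons_path => /andP[].
    rewrite size_take Hi; exact: leq_trans Hi Hs.
  have Hall2 : all P (x :: rcons s1 x).
    by rewrite /= all_rcons; move: Hall1 => /= /andP[-> ->].
  move/negP: (Hcyc Hall2); apply.
  by rewrite /is_gcycle size_rcons last_rcons belast_rcons eqxx Hu Hp1.
rewrite /= Hx /=.
case: s Hs Hall Hp Hx => [//|y s'] Hs Hall Hp _.
apply: (IH s' y) => //; first by move: Hall => /= /andP[_].
by move: Hp => /= /andP[_].
Qed.

Lemma Fnz_uniq y t : path Fnz y t -> uniq (belast y t).
Proof.
case/lastP: t => [//|t0 z] Hp.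
have Hall := path_Fnz_notin Hp.
rewrite belast_rcons in Hall *.
apply: (acyc_uniq (k := (size t0).+1)) => //.
move: Hp; rewrite rcons_path => /andP[Hp _].
apply: sub_path Hp => a b /and3P[_ H1 H2]; rewrite /edge_noloop; exact/andP.
Qed.

Lemma card_notS : (#|~: S| < n)%N.
Proof.
case/set0Pn: HS0 => x Hx.
have := cardsC S; rewrite card_ord => E.
apply: (@leq_trans (#|S| + #|~:S|)); last by rewrite E.
rewrite -{1}(add0n #|~:S|) ltn_add2r card_gt0.
by apply/set0Pn; exists x.
Qed.

Lemma Fn0 : Fm ^+ n = 0.
Proof.
apply/matrixP => u v; rewrite powF mxE big1 // => t _.
have [->|Hnz] := eqVneq (gprod Fm u t) 0; first by rewrite mulr0.
exfalso.
have Hp := gprod_nz Hnz.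
have Hu := Fnz_uniq Hp.
have Hall := path_Fnz_notin Hp.
move: (size_tuple t) Hu Hall; case/lastP: (val t) => [|t0 z].
  move=> Hn; have H0 : (n <= 0)%N by rewrite -Hn.
  by have := leq_trans (ltn_ord u) H0.
rewrite size_rcons belast_rcons => Hn Hu Hall.
have := uniq_leq_size Hu (s2 := enum (~: S)).
rewrite -cardE /= Hn => H.
suff : (n <= #|~: S|)%N by rewrite leqNgt card_notS.
apply: H => w Hw; rewrite mem_enum inE; exact: (allP Hall).
Qed.

Definition gw (a b : 'I_n) : W R := M a b / (lm - M a a).

Lemma gprod_F_g w t : all P (belast w t) -> uniq (belast w t) -> last w t \in S ->
  gprod Fm w t = gprod gw w t.
Proof.
elim: t w => [|z t IH] w /=; first by move=> *.
move=> /andP[Hw Hall] /andP[Hwn Hu] Hl.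
have Hwz : w != z.
  case: t {IH Hall Hu} Hwn Hl => [|y t] /= Hwn Hl.
    by apply/eqP => E; move: Hw; rewrite E Hl.
  by apply/eqP => E; move: Hwn; rewrite E in_cons eqxx.
by rewrite (IH _ Hall Hu Hl) mxE Hw Hwz.
Qed.

Lemma inB_size i j s : inB M S i j s -> (1 < size s)%N.
Proof. by case: s => [|x [|y s]] //=; rewrite /inB /=. Qed.

Lemma PwE i w t : Pw M (i :: w :: t) = M i w * gprod gw w t.
Proof. rewrite -(prod_nth gw i). reflexivity. Qed.

Lemma point_in i j (Hj : j \in S) w (t : seq 'I_n) :
  inB M S i j (i :: w :: t) -> Pw M (i :: w :: t) = M i w * gprod Fm w t.
Proof.
move/and4P => [Hpc _ /eqP El Hall].
have Hu : uniq (belast w t).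
  case/orP: Hpc => H.
    move: H; rewrite /is_gpath => /and3P[_ Hu _].
    by move: Hu; rewrite cons_uniq => /andP[_ /uniq_belast].
  move: H; rewrite /is_gcycle => /and4P[_ _ Hu _].
  by move: Hu; rewrite [belast _ _]/= cons_uniq => /andP[_].
have Hl : last w t \in S by rewrite -El in Hj.
by rewrite PwE (gprod_F_g Hall Hu Hl).
Qed.

Lemma point_out i j (Hi : i \in S) (Hj : j \in S) w (t : seq 'I_n) :
  last w t = j -> ~~ inB M S i j (i :: w :: t) -> M i w * gprod Fm w t = 0.
Proof.
move=> El HB; apply/eqP; apply: contraNT HB => Hnz.
move: Hnz; rewrite mulf_eq0 negb_or => /andP[Hm Hg].
have Hp := gprod_nz Hg.
have Hall := path_Fnz_notin Hp.
have Hu := Fnz_uniq Hp.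
have Hpe : path (edge M) i (w :: t).
  rewrite /=; apply/andP; split; first exact: Hm.
  by apply: sub_path Hp => a b /and3P[_ _ H].
have Ni : i \notin belast w t.
  by apply/negP => /(allP Hall) /= /negP H; apply: H.
have Nj : j \notin belast w t.
  by apply/negP => /(allP Hall) /= /negP H; apply: H.
have Ewt : w :: t = rcons (belast w t) j by rewrite lastI El.
have Hor : is_gpath (edge M) (i :: w :: t) || is_gcycle (edge M) (i :: w :: t).
  case: (eqVneq i j) => [Eij|Nij].
    apply/orP; right; rewrite /is_gcycle.
    apply/and4P; split.
    - by [].
    - rewrite [last _ _]/= El Eij; exact: eqxx.
    - rewrite [belast _ _]/= cons_uniq Ni; exact: Hu.
    - exact: Hpe.
  apply/orP; left; rewrite /is_gpath.
  apply/and3P; split.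
  - by [].
  - rewrite Ewt cons_uniq mem_rcons in_cons negb_or.
    by rewrite Nij Ni rcons_uniq Nj Hu.
  - exact: Hpe.
rewrite /inB; apply/and4P; split.
- exact: Hor.
- by rewrite [head _ _]/= eqxx.
- by rewrite [last _ _]/= El eqxx.
- exact: Hall.
Qed.

Lemma point i j (Hi : i \in S) (Hj : j \in S) x w (t : seq 'I_n) :
  (if inB M S i j (x :: w :: t) then Pw M (x :: w :: t) else 0) =
  (if (x == i) && (last w t == j) then M x w * gprod Fm w t else 0).
Proof.
case: ifP => HB; case: ifP => Hc.
- move/andP: Hc => [/eqP Ex /eqP El]; subst x; exact: point_in HB.
- move/and4P: HB => [_ Hh Hl _].
  have Hh' : x == i := Hh.
  have Hl' : last w t == j := Hl.
  by rewrite Hh' Hl' in Hc.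
- move/andP: Hc => [/eqP Ex /eqP El]; subst x.
  by rewrite (point_out Hi Hj El) // HB.
- by [].
Qed.

Lemma ifmul (b : bool) (a : W R) : b%:R * a = if b then a else 0.
Proof. by case: b; rewrite ?mul1r ?mul0r. Qed.

Lemma Bsum_m i j (Hi : i \in S) (Hj : j \in S) m :
  \sum_(t : (m.+2).-tuple 'I_n | inB M S i j t) Pw M t = (M *m Fm ^+ m) i j.
Proof.
rewrite big_mkcond big_tuple_cons (bigD1 i) //=.
rewrite [X in _ + X]big1 => [|x Hx]; last first.
  rewrite big_tuple_cons; apply: big1 => w _; apply: big1 => t _ /=.
  by rewrite point // (negbTE Hx).
rewrite addr0 big_tuple_cons mxE; apply: eq_bigr => w _.
rewrite powF mulr_sumr; apply: eq_bigr => t _ /=.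
rewrite point // eqxx /= ifmul.
by case: ifP; rewrite ?mulr0.
Qed.

Definition Gm : 'M[W R]_n := \sum_(k < n) Fm ^+ k.

Lemma Bsum_G i j (Hi : i \in S) (Hj : j \in S) : Bsum M S i j = (M *m Gm) i j.
Proof.
rewrite /Bsum -(big_mkord xpredT (fun k => \sum_(t : k.-tuple 'I_n | inB M S i j t) Pw M t)).
rewrite big_nat_recl // big_nat_recl //.
have Z k : (k < 2)%N -> \sum_(t : k.-tuple 'I_n | inB M S i j t) Pw M t = 0.
  move=> Hk; apply: big1 => t Ht; exfalso.
  by have := inB_size Ht; rewrite size_tuple ltnNge -ltnS Hk.
rewrite Z // Z // add0r add0r big_mkord /Gm mulmx_sumr summxE.
by apply: eq_bigr => k _; rewrite Bsum_m.
Qed.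


Lemma tele m : (1 - Fm) * \sum_(k < m) Fm ^+ k = 1 - Fm ^+ m.
Proof.
elim: m => [|m IH]; first by rewrite big_ord0 mulr0 expr0 subrr.
rewrite big_ord_recr /= mulrDr IH mulrBl mul1r -exprS.
by rewrite addrA subrK.
Qed.

Lemma tele' m : (\sum_(k < m) Fm ^+ k) * (1 - Fm) = 1 - Fm ^+ m.
Proof.
elim: m => [|m IH]; first by rewrite big_ord0 mul0r expr0 subrr.
rewrite big_ord_recr /= mulrDl IH mulrBr mulr1 -exprSr.
by rewrite addrA subrK.
Qed.

Lemma G1 : (1 - Fm) * Gm = 1.
Proof. by rewrite /Gm tele Fn0 subr0. Qed.

Lemma G2 : Gm * (1 - Fm) = 1.
Proof. by rewrite /Gm tele' Fn0 subr0. Qed.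

Definition ev (v : 'I_n) : W R := if v \in S then 0 else (lm - M v v)^-1.
Definition Ym : 'M[W R]_n := \matrix_(u, v) (Gm u v * ev v).

Lemma G_rowS w v : w \in S -> Gm w v = (w == v)%:R.
Proof.
move=> Hw.
have H0 : (0 < n)%N := leq_ltn_trans (leq0n _) (ltn_ord w).
rewrite /Gm summxE (bigD1 (Ordinal H0)) //= expr0 big1 ?addr0 => [|k Hk].
  by rewrite mxE.
have Hk0 : (0 < k)%N.
  rewrite lt0n; apply/eqP => E; move/eqP: Hk; apply; apply: val_inj; exact: E.
rewrite -(prednK Hk0) exprS -mulmxE mxE big1 // => y _.
by rewrite mxE Hw /= mul0r.
Qed.

Lemma Y_S w v : (w \in S) || (v \in S) -> Ym w v = 0.
Proof.
rewrite mxE /ev; case/orP => H.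
  rewrite G_rowS //; have [E|N] := eqVneq w v.
    by rewrite -E H mulr0.
  by rewrite mulr0n mul0r.
by rewrite H mulr0.
Qed.

Lemma lmM_neq0 u : u \notin S -> lm - M u u != 0.
Proof. by move=> Hu; rewrite subr_eq0 eq_sym Hdiag. Qed.

Lemma rowN u w : u \notin S -> (M - lm%:M) u w = (lm - M u u) * (Fm - 1) u w.
Proof.
move=> Hu; rewrite !mxE Hu /=.
have [E|N] := eqVneq u w.
  rewrite -E /= mulr1n sub0r mulrN1 opprB.
  by [].
rewrite /= mulr0n !subr0 mulrCA mulfV ?mulr1 //.
exact: lmM_neq0.
Qed.

Lemma NY u v : u \notin S -> v \notin S -> ((M - lm%:M) *m Ym) u v = - (u == v)%:R.
Proof.
move=> Hu Hv.
have E1 : ((Fm - 1) *m Gm) = -1 by rewrite mulmxE -opprB mulNr G1.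
transitivity ((lm - M u u) * ev v * ((Fm - 1) *m Gm) u v).
  rewrite [in RHS]mxE mulr_sumr mxE; apply: eq_bigr => w _.
  rewrite rowN // [Ym _ _]mxE; ring.
rewrite E1 !mxE /ev (negbTE Hv).
have [E|N] := eqVneq u v.
  by rewrite -E mulr1n mulrN1 mulfV // lmM_neq0.
by rewrite mulr0n oppr0 mulr0.
Qed.

Definition Xm : 'M[W R]_#|~: S| := \matrix_(a, b) (- Ym (sidx a) (sidx b)).

Lemma sum_sidx (f : 'I_n -> W R) : (forall w, w \in S -> f w = 0) ->
  \sum_(c < #|~: S|) f (sidx c) = \sum_w f w.
Proof.
move=> Hf; rewrite /sidx -(big_enum_val (A := mem (~: S))) /= big_mkcond.
apply: eq_bigr => w _; rewrite inE; case: ifP => // /negbFE Hw.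
by rewrite Hf.
Qed.

Lemma notS (a : 'I_#|~: S|) : sidx a \notin S.
Proof. by have := enum_valP a; rewrite inE. Qed.

Lemma inS (a : 'I_#|S|) : sidx a \in S.
Proof. exact: enum_valP. Qed.

Lemma AX : redA (M - lm%:M) S *m Xm = 1%:M.
Proof.
apply/matrixP => a b.
rewrite mxE (eq_bigr (fun c => (M - lm%:M) (sidx a) (sidx c) * - Ym (sidx c) (sidx b))); last first.
  by move=> c _; rewrite [redA _ _ _ _]mxE [Xm _ _]mxE.
rewrite (sum_sidx (f := fun w => (M - lm%:M) (sidx a) w * - Ym w (sidx b))); last first.
  by move=> w Hw; rewrite Y_S ?Hw // oppr0 mulr0.
under eq_bigr do rewrite mulrN.
rewrite sumrN.
have := NY (notS a) (notS b); rewrite mxE => ->.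
by rewrite opprK [RHS]mxE /sidx (inj_eq enum_val_inj).
Qed.

Lemma GF : Gm *m Fm = Gm - 1.
Proof. by rewrite mulmxE -[in RHS]G2 mulrBr mulr1 opprB addrC subrK. Qed.

Lemma RSE a b : RS M S a b = Bsum M S (sidx a) (sidx b).
Proof.
rewrite mxE; case: ifP => // Hne.
rewrite /Bsum big1 // => k _; apply: big1 => t Ht; exfalso.
move/negbT/negP: Hne; apply; rewrite /Bnonempty; apply/existsP; exists k; apply/existsP; exists t; exact: Ht.
Qed.

Lemma CXB a b :
  (redC (M - lm%:M) S *m Xm *m redB (M - lm%:M) S) a b =
  - ((M *m Gm *m Fm) (sidx a) (sidx b)).
Proof.
set i := sidx a; set j := sidx b.
have Hi : i \in S := inS a.
have Hj : j \in S := inS b.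
set N := M - lm%:M.
have E3 : (redC N S *m Xm *m redB N S) a b = \sum_(d < #|~:S|)
    (\sum_(c < #|~:S|) N i (sidx c) * - Ym (sidx c) (sidx d)) * N (sidx d) j.
  rewrite mxE; apply: eq_bigr => d _; rewrite mxE [redB _ _ _ _]mxE; congr (_ * _).
  by apply: eq_bigr => c _; rewrite [redC _ _ _ _]mxE [Xm _ _]mxE.
rewrite E3.
have Hin x : \sum_(c < #|~:S|) N i (sidx c) * - Ym (sidx c) x =
             \sum_w N i w * - Ym w x.
  apply: (sum_sidx (f := fun w => N i w * - Ym w x)) => w Hw.
  by rewrite Y_S ?Hw // oppr0 mulr0.
under eq_bigr do rewrite Hin.
rewrite (sum_sidx (f := fun x => (\sum_w N i w * - Ym w x) * N x j)); last first.
  move=> x Hx; rewrite big1 ?mul0r // => w _.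
  by rewrite Y_S ?Hx ?orbT // oppr0 mulr0.
rewrite [in RHS]mxE -sumrN; apply: eq_bigr => x _.
rewrite [(M *m Gm) _ _]mxE mulr_suml mulr_suml -sumrN; apply: eq_bigr => w _.
have [Hx|Hx] := boolP (x \in S).
  rewrite Y_S ?Hx ?orbT // oppr0 mulr0 mul0r.
  by rewrite [Fm _ _]mxE Hx /= mulr0 oppr0.
have Nxj : x != j by apply: contraNneq Hx => ->.
have [Hw|Hw] := boolP (w \in S).
  rewrite Y_S ?Hw // oppr0 mulr0 mul0r G_rowS //.
  have Nwx : w != x by apply: contraNneq Hx => <-.
  by rewrite (negbTE Nwx) mulr0n mulr0 mul0r oppr0.
have Niw : i != w by apply: contraNneq Hw => <-.
rewrite /N [(M - _) i w]mxE [(M - _) x j]mxE [Ym _ _]mxE [Fm _ _]mxE /ev.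
rewrite !mxE Hx Nxj (negbTE Niw) (negbTE Nxj) (negbTE Hx) /= !mulr0n !subr0.
ring.
Qed.

Lemma final_eq (Hinv : invmx (redA (M - lm%:M) S) = Xm) :
  mxreduce (M - lm%:M) S + lm%:M = RS M S.
Proof.
apply/matrixP => a b.
rewrite RSE (Bsum_G (inS a) (inS b)) /mxreduce Hinv.
rewrite [LHS]mxE [X in X + _]mxE [X in _ + X + _]mxE CXB opprK.
rewrite -mulmxA GF mulmxBr mulmx1 [redD _ _ _ _]mxE.
rewrite !mxE /sidx (inj_eq enum_val_inj).
ring.
Qed.

Lemma lemma3_aux : redA (M - lm%:M) S \in unitmx /\
  mxreduce (M - lm%:M) S + lm%:M = RS M S.
Proof.
have [HU _] := mulmx1_unit AX.
split; first exact: HU.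
apply: final_eq.
by rewrite -[RHS](mulKmx HU) AX mulmx1.
Qed.
End Main.

Theorem lemma3 (R : realType) (n : nat) (M : 'M[W R]_n) (S : {set 'I_n}) :
  structural M S ->
  redA (M - (lam R)%:M) S \in unitmx /\
  mxreduce (M - (lam R)%:M) S + (lam R)%:M = RS M S.
Proof.
case=> HS0 Hcyc Hdiag.
exact: (lemma3_aux HS0 Hcyc Hdiag).
Qed.
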